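(* Let $G=([n],E)$ be a persistent graph and let $a<b<c$ be vertices of a 3-simplex $S\in\Xi(G)$. Then $G$ does not contain any edge $\{x,y\}$ with $a<x<b<y<c$.
   Context: A graph $G=([n],E)$ is persistent if (1) $\{i,i+1\}\in E$ for all $1\le i<n$; (2) (X-property) if $\{a,c\},\{b,d\}\in E$ for $a<b<c<d$ then $\{a,d\}\in E$; (3) (bar-property) for every edge $\{a,b\}\in E$ with $a<b-1$ there is $x$ with $a<x<b$ and $\{a,x\},\{x,b\}\in E$. For a persistent $G$, $\hat G$ is the graph on $\{0,1,\dots,n+1\}$ with edge set $E$ together with all pairs $\{0,i\}$ and $\{n+1,i\}$ ($i\in\{0,\dots,n+1\}$, $i\ne 0$ resp. $i \ne n+1$). For an edge $e=\{v,w\}\in E$ with $v<w$, let $\ell_G(e)=\max\{i : i<v,\ \{i,w\}\in E(\hat G)\}$ and $r_G(e)=\min\{i : w<i,\ \{i,v\}\in E(\hat G)\}$, and $\xi_G(e)=\{\ell_G(e),v,w,r_G(e)\}$. Then $\Xi(G)=\{\xi_G(e): e\in E\}$, a set of 4-element subsets of $\{0,\dots,n+1\}$. *)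

(* Defs.v *)
From mathcomp Require Import all_boot.
Set Implicit Arguments. Unset Strict Implicit. Unset Printing Implicit Defensive.

(* A graph on the vertex set [n] = {1,...,n} is given by a boolean relation
   E : rel nat; {i,j} is an edge iff E i j.  We require it to be a simple
   undirected graph on [n]. *)
Definition graph_on (n : nat) (E : rel nat) : Prop :=
  (forall i j, E i j -> E j i) /\
  (forall i, ~~ E i i) /\
  (forall i j, E i j -> 1 <= i <= n).

Definition persistent (n : nat) (E : rel nat) : Prop :=
  graph_on n E /\
  (forall i, 1 <= i -> i < n -> E i i.+1) /\
  (forall a b c d, a < b -> b < c -> c < d -> E a c -> E b d -> E a d) /\
  (forall a b, a < b.-1 -> a < b -> E a b ->
     exists x, [/\ a < x, x < b, E a x & E x b]).

Definition hatE (n : nat) (E : rel nat) : rel nat := fun i j =>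
  [&& i != j, i <= n.+1, j <= n.+1 &
      [|| i == 0, j == 0, i == n.+1, j == n.+1 | E i j]].

(* l_G(e) = max {i : i < v, {i,w} in E(hat G)}  (the filtered list is increasing) *)
Definition ell (n : nat) (E : rel nat) (v w : nat) : nat :=
  last 0 [seq i <- iota 0 v | hatE n E i w].

(* r_G(e) = min {i : w < i, {i,v} in E(hat G)} ; i ranges over w+1..n+1 *)
Definition rr (n : nat) (E : rel nat) (v w : nat) : nat :=
  head n.+1 [seq i <- iota w.+1 (n.+1 - w) | hatE n E i v].

(* xi_G(e) for e = {v,w}, v < w, as the (4-element) set {l, v, w, r},
   represented by a list; membership is via \in. *)
Definition xi (n : nat) (E : rel nat) (v w : nat) : seq nat :=
  [:: ell n E v w; v; w; rr n E v w].

Definition in_Xi (n : nat) (E : rel nat) (S : seq nat) : Prop :=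
  exists v w, [/\ v < w, E v w & S = xi n E v w].

(* Main.v *)
Require Import Defs.
From mathcomp Require Import all_boot.
From mathcomp Require Import zify.

Lemma ell_spec (p : pred nat) v i :
  last 0 [seq j <- iota 0 v | p j] < i < v -> ~~ p i.
Proof.
elim: v i => [|v IH] i; first by rewrite /=; lia.
rewrite -[v.+1]addn1 iotaD add0n filter_cat /=.
case pv: (p v) => /=.
  by rewrite cats1 last_rcons; lia.
rewrite cats0 => /andP [h1 h2].
have [->|ne] := eqVneq i v; first by rewrite pv.
apply: IH; apply/andP; split => //; lia.
Qed.

Lemma rr_spec (p : pred nat) d k m i :
  m <= i < m + k -> i < head d [seq j <- iota m k | p j] -> ~~ p i.
Proof.
elim: k m => [|k IH] m /=; first by lia.
case pm: (p m) => /=; first by lia.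
move=> h1 h2.
have [->|ne] := eqVneq i m; first by rewrite pm.
apply: (IH m.+1) => //; lia.
Qed.

Lemma core (E : rel nat) l v w r :
  (forall a b c d, a < b -> b < c -> c < d -> E a c -> E b d -> E a d) ->
  (forall a b, a < b.-1 -> a < b -> E a b ->
     exists x, [/\ a < x, x < b, E a x & E x b]) ->
  v < w -> E v w ->
  (forall i, l < i < v -> E i w = false) ->
  (forall i, w < i < r -> E v i = false) ->
  forall x y, E x y ->
  ~ ((l < x < v /\ v < y < w) \/ (v < x < w /\ w < y < r) \/ (l < x < v /\ w < y < r)).
Proof.
move=> HX Hbar vw Evw HA HB x y Exy [[/andP[h1 h2] /andP[h3 h4]]|[[/andP[h1 h2] /andP[h3 h4]]|H]].
- have := HX x v y w h2 h3 h4 Exy Evw. by rewrite HA //; lia.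
- have := HX v x w y h1 h2 h3 Evw Exy. by rewrite HB //; lia.
have : forall k x y, y - x <= k -> E x y -> ~ (l < x < v /\ w < y < r).
  elim=> [|k IH] x' y' hk E' [/andP[h1 h2] /andP[h3 h4]]; first by lia.
  have [z [z1 z2 Exz Ezy]] := Hbar x' y' ltac:(lia) ltac:(lia) E'.
  have [zv|zv] := ltnP z v.
    by apply: (IH z y') => //; lia.
  have [ev|nev] := eqVneq z v.
    by subst z; rewrite HB in Ezy => //; lia.
  have [zw|zw] := ltnP z w.
    have := HX x' v z w h2 ltac:(lia) zw Exz Evw. by rewrite HA //; lia.
  have [ew|new] := eqVneq z w.
    by subst z; rewrite HA in Exz => //; lia.
  by apply: (IH x' z) => //; lia.
by move/(_ (y - x) x y (leqnn _) Exy).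
Qed.

Theorem lemma10 (n : nat) (E : rel nat) (S : seq nat) (a b c : nat) :
  persistent n E -> in_Xi n E S ->
  a \in S -> b \in S -> c \in S -> a < b -> b < c ->
  forall x y, E x y -> ~ [/\ a < x, x < b, b < y & y < c].
Proof.
move=> [[Hsym [Hirr Hrng]] [_ [HX Hbar]]] [v [w [vw Evw ->]]].
have Ewv := Hsym _ _ Evw.
have /andP[v1 vn] := Hrng _ _ Evw.
have /andP[w1 wn] := Hrng _ _ Ewv.
have lv : ell n E v w < v.
  rewrite /ell.
  have := mem_last 0 [seq j <- iota 0 v | hatE n E j w].
  rewrite inE => /orP[/eqP ->|]; first lia.
  by rewrite mem_filter mem_iota add0n => /andP[_] /andP[_].
have wr : w < rr n E v w.
  rewrite /rr; case E1: [seq j <- iota w.+1 (n.+1 - w) | hatE n E j v] => [|h t] /=; first by lia.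
  have : h \in [seq j <- iota w.+1 (n.+1 - w) | hatE n E j v] by rewrite E1 inE eqxx.
  by rewrite mem_filter mem_iota => /andP[_ /andP[]]; lia.
have rn : rr n E v w <= n.+1.
  rewrite /rr; case E1: [seq j <- iota w.+1 (n.+1 - w) | hatE n E j v] => [|h t] /=; first by lia.
  have : h \in [seq j <- iota w.+1 (n.+1 - w) | hatE n E j v] by rewrite E1 inE eqxx.
  by rewrite mem_filter mem_iota => /andP[_ /andP[]]; lia.
set l := ell n E v w in lv *.
set r := rr n E v w in wr rn *.
have HA : forall i, l < i < v -> E i w = false.
  move=> i hi; apply/negP => Eiw.
  have /andP[i1 i2] := Hrng _ _ Eiw.
  have := @ell_spec (fun j => hatE n E j w) v i hi; rewrite /= /hatE Eiw !orbT andbT.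
  have -> : (i != w) by apply/eqP; lia.
  have hh1 : i <= n.+1 by lia.
  have hh2 : w <= n.+1 by lia.
  by rewrite hh1 hh2.
have HB : forall i, w < i < r -> E v i = false.
  move=> i hi; apply/negP => Evi.
  have Eiv := Hsym _ _ Evi.
  have /andP[i1 i2] := Hrng _ _ Eiv.
  have := @rr_spec (hatE n E ^~ v) n.+1 (n.+1 - w) w.+1 i ltac:(lia) (proj2 (andP hi)).
  rewrite /hatE Eiv !orbT andbT.
  have -> : (i != v) by apply/eqP; lia.
  have hh1 : i <= n.+1 by lia.
  have hh2 : v <= n.+1 by lia.
  by rewrite hh1 hh2.
move=> Ha Hb Hc ab bc x y Exy [ax xb byy yc].
have C := @core E l v w r HX Hbar vw Evw HA HB x y Exy.
move: Ha Hb Hc; rewrite !inE -/l -/r.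
move=> /or4P[] /eqP ? /or4P[] /eqP ? /or4P[] /eqP ?; subst; try lia.
- have [ew|new] := eqVneq y w; last by lia.
  by subst y; rewrite HA in Exy => //; lia.
- have [ev|nev] := eqVneq x v; last by lia.
  by subst x; rewrite HB in Exy => //; lia.
Qed.
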